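(* Let $(\Phi,D)$ and $(\Psi,E)$ be domain-free continuous information algebras, let $f,g\in[\Phi\rightarrow\Psi]_c$ and $(x,y)\in D\times E$. Then $f\otimes g\in[\Phi\rightarrow\Psi]_c$. Moreover, if $(\Phi,D)$ and $(\Psi,E)$ are s-continuous, then $f^{\Rightarrow(x,y)}\in[\Phi\rightarrow\Psi]_c$.
   Context: A domain-free information algebra $(\Phi,D)$ consists of a set $\Phi$, a lattice $D$, a combination $\otimes$ and a focusing $(\psi,x)\mapsto\psi^{\Rightarrow x}$ ($x\in D$) such that: $\otimes$ is associative, commutative with neutral element $e$; $(\psi^{\Rightarrow y})^{\Rightarrow x}=\psi^{\Rightarrow x\wedge y}$; $(\phi^{\Rightarrow x}\otimes\psi)^{\Rightarrow x}=\phi^{\Rightarrow x}\otimes\psi^{\Rightarrow x}$; every $\psi$ has some $x$ with $\psi^{\Rightarrow x}=\psi$; $\psi\otimes\psi^{\Rightarrow x}=\psi$. Order: $\psi\le\phi$ iff $\psi\otimes\phi=\phi$; suprema refer to this order. $a\ll b$ means: for every directed $X$ with $b\le\vee X$ there is $c\in X$ with $a\le c$. $(\Phi,D)$, with $D$ having a top element, is continuous (resp. s-continuous) if there exists $\Gamma\subseteq\Phi$, closed under combination and containing $e$, such that every directed subset of $\Gamma$ has a supremum in $\Phi$ and $\phi=\vee\{\psi\in\Gamma:\psi\ll\phi\}$ for all $\phi$ (resp. $\phi^{\Rightarrow x}=\vee\{\psi\in\Gamma:\psi=\psi^{\Rightarrow x}\ll\phi\}$ for all $\phi,x$). For continuous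 $(\Phi,D)$, $(\Psi,E)$, $[\Phi\rightarrow\Psi]_c$ is the set of maps $f:\Phi\to\Psi$ with $f(\vee X)=\vee f(X)$ for every directed $X\subseteq\Phi$. For $f,g\in[\Phi\rightarrow\Psi]_c$ and $(x,y)\in D\times E$ define $(f\otimes g)(\phi)=f(\phi)\otimes g(\phi)$ and $f^{\Rightarrow(x,y)}(\phi)=(f(\phi^{\Rightarrow x}))^{\Rightarrow y}$. *)

(* Defs.v *)
From HB Require Import structures.
From mathcomp Require Import all_boot all_order.

Set Implicit Arguments.
Unset Strict Implicit.
Unset Printing Implicit Defensive.

Record infoAlg (disp : Order.disp_t) (D : latticeType disp) := InfoAlg {
  ia_car :> Type;
  ia_comb : ia_car -> ia_car -> ia_car;
  ia_e : ia_car;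
  ia_focus : ia_car -> D -> ia_car;
  ia_combA : forall a b c, ia_comb a (ia_comb b c) = ia_comb (ia_comb a b) c;
  ia_combC : forall a b, ia_comb a b = ia_comb b a;
  ia_comb_e : forall a, ia_comb a ia_e = a;
  ia_transitivity : forall psi x y,
      ia_focus (ia_focus psi y) x = ia_focus psi (Order.meet x y);
  ia_combination : forall phi psi x,
      ia_focus (ia_comb (ia_focus phi x) psi) x
      = ia_comb (ia_focus phi x) (ia_focus psi x);
  ia_support : forall psi, exists x, ia_focus psi x = psi;
  ia_idempotency : forall psi x, ia_comb psi (ia_focus psi x) = psi
}.

Section Order.
Variables (disp : Order.disp_t) (D : latticeType disp) (A : infoAlg D).

Definition ia_le (a b : A) : Prop := ia_comb a b = b.

Definition is_sup (X : A -> Prop) (s : A) : Prop :=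
  (forall a, X a -> ia_le a s) /\
  (forall u, (forall a, X a -> ia_le a u) -> ia_le s u).

Definition directed (X : A -> Prop) : Prop :=
  (exists a, X a) /\
  (forall a b, X a -> X b -> exists c, [/\ X c, ia_le a c & ia_le b c]).

Definition way_below (a b : A) : Prop :=
  forall X, directed X ->
    (exists s, is_sup X s /\ ia_le b s) -> exists2 c, X c & ia_le a c.

Definition basis_ok (G : A -> Prop) : Prop :=
  [/\ G (ia_e A),
      (forall a b, G a -> G b -> G (ia_comb a b)) &
      (forall X, (forall a, X a -> G a) -> directed X -> exists s, is_sup X s)].

Definition continuous_ia : Prop :=
  exists G : A -> Prop, basis_ok G /\
    forall phi, is_sup (fun psi => G psi /\ way_below psi phi) phi.

Definition s_continuous_ia : Prop :=
  exists G : A -> Prop, basis_ok G /\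
    forall phi x, is_sup (fun psi => [/\ G psi, ia_focus psi x = psi &
                                              way_below psi phi])
                         (ia_focus phi x).
End Order.

Definition cont_map (d1 d2 : Order.disp_t) (D : latticeType d1)
  (E : latticeType d2) (P : infoAlg D) (Q : infoAlg E) (f : P -> Q) : Prop :=
  forall X : P -> Prop, directed X -> forall s, is_sup X s ->
    is_sup (fun b : Q => exists2 a, X a & b = f a) (f s).

Definition map_comb (d1 d2 : Order.disp_t) (D : latticeType d1)
  (E : latticeType d2) (P : infoAlg D) (Q : infoAlg E) (f g : P -> Q) : P -> Q :=
  fun phi => ia_comb (f phi) (g phi).

Definition map_focus (d1 d2 : Order.disp_t) (D : latticeType d1)
  (E : latticeType d2) (P : infoAlg D) (Q : infoAlg E) (f : P -> Q)
  (x : D) (y : E) : P -> Q :=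
  fun phi => ia_focus (f (ia_focus phi x)) y.

(* Main.v *)
Require Import Defs.
From mathcomp Require Import all_boot all_order.
Set Implicit Arguments.

Section Basics.
Variables (disp : Order.disp_t) (D : latticeType disp) (A : infoAlg D).
Implicit Types a b c u : A.

Lemma le_refl a : ia_le a a.
Proof. case: (ia_support a) => x Hx. rewrite /ia_le -{2 3}Hx. by rewrite ia_idempotency Hx. Qed.

Lemma le_trans {a b c} : ia_le a b -> ia_le b c -> ia_le a c.
Proof. rewrite /ia_le => H1 H2. by rewrite -H2 ia_combA H1. Qed.

Lemma le_comb_l a b : ia_le a (ia_comb a b).
Proof. rewrite /ia_le ia_combA. by have -> := le_refl a. Qed.

Lemma le_comb_r a b : ia_le b (ia_comb a b).
Proof. rewrite ia_combC; exact: le_comb_l. Qed.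

Lemma comb_lub a b u : ia_le a u -> ia_le b u -> ia_le (ia_comb a b) u.
Proof. rewrite /ia_le => H1 H2. by rewrite -ia_combA H2 H1. Qed.

Lemma comb_mono a b c u : ia_le a c -> ia_le b u ->
  ia_le (ia_comb a b) (ia_comb c u).
Proof.
move=> H1 H2; apply: comb_lub.
  exact: le_trans H1 (le_comb_l _ _).
exact: le_trans H2 (le_comb_r _ _).
Qed.

Lemma focus_le a x : ia_le (ia_focus a x) a.
Proof. by rewrite /ia_le ia_combC ia_idempotency. Qed.

Lemma focus_mono a b x : ia_le a b -> ia_le (ia_focus a x) (ia_focus b x).
Proof.
move=> H. have H' : ia_comb (ia_focus a x) b = b := le_trans (focus_le a x) H.
by rewrite /ia_le -ia_combination H'.
Qed.

Lemma is_sup_ext (X Y : A -> Prop) s : (forall a, X a <-> Y a) ->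
  is_sup X s -> is_sup Y s.
Proof.
move=> E [H1 H2]; split.
  by move=> a /E; apply: H1.
by move=> u Hu; apply: H2 => a /E; apply: Hu.
Qed.

Lemma focus_sup x : s_continuous_ia A -> forall X s, directed X -> is_sup X s ->
  is_sup (fun b => exists2 a, X a & b = ia_focus a x) (ia_focus s x).
Proof.
move=> [G [_ HG]] X s dX [Hs1 Hs2]; split.
  by move=> b [a Xa ->]; apply: focus_mono; apply: Hs1.
move=> u Hu. case: (HG s x) => _ Hl; apply: Hl => p [Gp Fp Wp].
have [c Xc pc] : exists2 c, X c & ia_le p c.
  apply: Wp => //; exists s; split; [by split|exact: le_refl].
rewrite -Fp; apply: le_trans (focus_mono x pc) _.
by apply: Hu; exists c.
Qed.

Lemma directed_focus x (X : A -> Prop) : directed X ->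
  directed (fun b => exists2 a, X a & b = ia_focus a x).
Proof.
move=> [[a Xa] H]; split; first by exists (ia_focus a x), a.
move=> _ _ [a1 X1 ->] [a2 X2 ->].
have [c [Xc l1 l2]] := H _ _ X1 X2.
exists (ia_focus c x); split; [by exists c | exact: focus_mono | exact: focus_mono].
Qed.
End Basics.

Section Maps.
Variables (d1 d2 : Order.disp_t) (D : latticeType d1) (E : latticeType d2)
  (P : infoAlg D) (Q : infoAlg E).

Lemma cont_mono (f : P -> Q) a b : cont_map f -> ia_le a b -> ia_le (f a) (f b).
Proof.
move=> Hf ab.
have dX : directed (fun c => c = a \/ c = b).
  split; first by exists a; left.
  move=> c1 c2 H1 H2; exists b; split; first by right.
    by case: H1 => ->; [exact: ab | exact: le_refl].
  by case: H2 => ->; [exact: ab | exact: le_refl].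
have sX : is_sup (fun c => c = a \/ c = b) b.
  split; first by move=> c [->|->]; [exact: ab | exact: le_refl].
  by move=> u Hu; apply: Hu; right.
have [H _] := Hf _ dX _ sX. apply: H. by exists a; [left|].
Qed.

Lemma directed_image (f : P -> Q) (X : P -> Prop) : cont_map f -> directed X ->
  directed (fun b => exists2 a, X a & b = f a).
Proof.
move=> Hf [[a Xa] H]; split; first by exists (f a), a.
move=> _ _ [a1 X1 ->] [a2 X2 ->].
have [c [Xc l1 l2]] := H _ _ X1 X2.
exists (f c); split; [by exists c | exact: cont_mono | exact: cont_mono].
Qed.
End Maps.

Theorem proposition3p12 (d1 d2 : Order.disp_t)
  (D : tLatticeType d1) (E : tLatticeType d2)
  (Phi : infoAlg D) (Psi : infoAlg E)
  (f g : Phi -> Psi) (x : D) (y : E) :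
  continuous_ia Phi -> continuous_ia Psi ->
  cont_map f -> cont_map g ->
  cont_map (map_comb f g) /\
  (s_continuous_ia Phi -> s_continuous_ia Psi -> cont_map (map_focus f x y)).
Proof.
move=> _ _ Hf Hg; split.
  move=> X dX s Hs.
  have [F1 F2] := Hf X dX s Hs.
  have [G1 G2] := Hg X dX s Hs.
  split.
    move=> _ [a Xa ->]; rewrite /map_comb; apply: comb_mono.
      by apply: F1; exists a.
    by apply: G1; exists a.
  move=> u Hu; rewrite /map_comb; apply: comb_lub.
    apply: F2 => _ [a Xa ->]; apply: le_trans (@le_comb_l _ _ _ (f a) (g a)) _.
    by apply: Hu; exists a.
  apply: G2 => _ [a Xa ->]; apply: le_trans (@le_comb_r _ _ _ (f a) (g a)) _.
  by apply: Hu; exists a.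
move=> sP sQ X dX s Hs.
have H1 := focus_sup x sP dX Hs.
have dX1 := directed_focus x dX.
have H2 := Hf _ dX1 _ H1.
have dX2 := directed_image Hf dX1.
have H3 := focus_sup y sQ dX2 H2.
apply: is_sup_ext H3 => b; split.
  by move=> [_ [_ [a Xa ->] ->] ->]; exists a.
move=> [a Xa ->]; exists (f (ia_focus a x)) => //.
by exists (ia_focus a x) => //; exists a.
Qed.
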